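(* Let $G=(V,E)$ be a strongly biconnected directed graph, let $t\ge 1$, and let $w_0,w_1,\ldots,w_t$ be pairwise distinct vertices of $G$ such that $w_0 \overset{e}{\leftrightsquigarrow} w_t$ and $w_{i-1} \overset{e}{\leftrightsquigarrow} w_i$ for every $i\in\{1,2,\ldots,t\}$. Then $\{w_0,w_1,\ldots,w_t\}$ is contained in some $2$-edge-biconnected block of $G$.
   Context: All graphs are finite. A directed graph $H$ is strongly biconnected if $H$ is strongly connected and its underlying undirected graph is biconnected. A strongly biconnected component of a directed graph $H=(W,F)$ is a maximal vertex subset $C\subseteq W$ such that the induced subgraph $H[C]$ is strongly biconnected. For a strongly biconnected directed graph $G=(V,E)$ and an edge $b\in E$, $G\setminus\{b\}=(V,E\setminus\{b\})$. For distinct $x,y\in V$, write $x \overset{e}{\leftrightsquigarrow} y$ if for every edge $b\in E$ there is a strongly biconnected component of $G\setminus\{b\}$ containing both $x$ and $y$. A $2$-edge-biconnected block of $G$ is a maximal vertex subset $U\subseteq V$ with $|U|>1$ such that $x \overset{e}{\leftrightsquigarrow} y$ for all distinct $x,y\in U$. *)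

(* Defs.v *)
(* A finite directed graph is a finType V of vertices
   together with an edge set E : {set V * V} (edge (x,y) goes from x to y). *)
From mathcomp Require Import all_boot.
Set Implicit Arguments. Unset Strict Implicit. Unset Printing Implicit Defensive.

Section Graphs.
Variable V : finType.

Definition dadj (F : {set V * V}) (C : {set V}) : rel V :=
  fun a b => [&& (a, b) \in F, a \in C & b \in C].

Definition uadj (F : {set V * V}) (C : {set V}) : rel V :=
  fun a b => [&& ((a, b) \in F) || ((b, a) \in F), a \in C & b \in C].

Definition strongly_connected (F : {set V * V}) (C : {set V}) : Prop :=
  forall x y, x \in C -> y \in C -> connect (dadj F C) x y.

Definition uconnected (F : {set V * V}) (C : {set V}) : Prop :=
  forall x y, x \in C -> y \in C -> connect (uadj F C) x y.

Definition ubiconnected (F : {set V * V}) (C : {set V}) : Prop :=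
  uconnected F C /\ forall v, v \in C -> uconnected F (C :\ v).

Definition strongly_biconnected (F : {set V * V}) (C : {set V}) : Prop :=
  strongly_connected F C /\ ubiconnected F C.

Definition sb_component (F : {set V * V}) (C : {set V}) : Prop :=
  strongly_biconnected F C /\
  forall D : {set V}, C \subset D -> strongly_biconnected F D -> D = C.

Definition e_rel (E : {set V * V}) (x y : V) : Prop :=
  forall b, b \in E ->
    exists C : {set V}, [/\ sb_component (E :\ b) C, x \in C & y \in C].

Definition two_edge_biconnected_set (E : {set V * V}) (U : {set V}) : Prop :=
  1 < #|U| /\ forall x y, x \in U -> y \in U -> x != y -> e_rel E x y.

Definition two_edge_biconnected_block (E : {set V * V}) (U : {set V}) : Prop :=
  two_edge_biconnected_set E U /\
  forall U' : {set V}, U \subset U' -> two_edge_biconnected_set E U' -> U' = U.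

End Graphs.

(* Main.v *)
From Stdlib Require Import Classical IndefiniteDescription.
Require Import Defs.
From mathcomp Require Import all_boot.
From mathcomp Require Import zify.

Set Implicit Arguments. Unset Strict Implicit. Unset Printing Implicit Defensive.

Section Helpers.
Variable V : finType.

Lemma mono_d (F : {set V * V}) (C D : {set V}) : C \subset D ->
  forall x y, connect (dadj F C) x y -> connect (dadj F D) x y.
Proof.
move=> sub x y; apply: connect_sub x y => a b /and3P[h ha hb]; apply: connect1.
by rewrite /dadj h (subsetP sub _ ha) (subsetP sub _ hb).
Qed.

Lemma mono_u (F : {set V * V}) (C D : {set V}) : C \subset D ->
  forall x y, connect (uadj F C) x y -> connect (uadj F D) x y.
Proof.
move=> sub x y; apply: connect_sub x y => a b /and3P[h ha hb]; apply: connect1.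
by rewrite /uadj h (subsetP sub _ ha) (subsetP sub _ hb).
Qed.

Lemma sc_uc (F : {set V * V}) (C : {set V}) :
  strongly_connected F C -> uconnected F C.
Proof.
move=> hsc x y hx hy; apply: connect_sub (hsc x y hx hy) => a b /and3P[h ha hb].
by apply: connect1; rewrite /uadj h ha hb.
Qed.

Lemma uadj_sym (F : {set V * V}) (C : {set V}) : connect_sym (uadj F C).
Proof.
apply: sym_connect_sym => a b; rewrite /uadj orbC; congr (_ && _); apply: andbC.
Qed.

Section Union.
Variables (F : {set V * V}) (t : nat) (w : nat -> V) (C : nat -> {set V}).
Hypothesis t1 : 1 <= t.
Hypothesis HC : forall i, i <= t -> strongly_biconnected F (C i).
Hypothesis H00 : w 0 \in C 0.
Hypothesis H0t : w t \in C 0.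
Hypothesis Hi : forall i, 1 <= i <= t -> w i.-1 \in C i /\ w i \in C i.
Hypothesis inj : forall i j, i <= t -> j <= t -> w i = w j -> i = j.

Definition DD := \bigcup_(i < t.+1) C i.

Lemma subD i : i <= t -> C i \subset DD.
Proof.
move=> hi; apply/subsetP=> x hx; apply/bigcupP.
by exists (Ordinal (n:=t.+1) (m:=i) hi).
Qed.

Lemma inD x : x \in DD -> exists2 i, i <= t & x \in C i.
Proof. by case/bigcupP=> i _ hx; exists (val i); first exact: (ltn_ord i). Qed.

Lemma wC k : k <= t -> w k \in C k.
Proof.
case: k => [|k] hk; first exact: H00.
by have [] := Hi (i:=k.+1) ltac:(by rewrite hk).
Qed.

Lemma wk_w0 k : k <= t ->
  connect (dadj F DD) (w 0) (w k) /\ connect (dadj F DD) (w k) (w 0).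
Proof.
elim: k => [|k IH] hk; first by split; apply: connect0.
have [IH1 IH2] := IH (ltnW hk).
have [a b] := Hi (i:=k.+1) ltac:(by rewrite hk).
have [sc _] := HC hk.
split.
- apply: connect_trans IH1 _; apply: mono_d (subD hk) _ _ _; exact: sc.
- apply: connect_trans _ IH2; apply: mono_d (subD hk) _ _ _; exact: sc.
Qed.

Lemma sc_D : strongly_connected F DD.
Proof.
move=> x y /inD[i hi hx] /inD[j hj hy].
have [sci _] := HC hi; have [scj _] := HC hj.
apply: (@connect_trans _ _ (w i)).
  by apply: mono_d (subD hi) _ _ _; apply: sci => //; apply: wC.
apply: (@connect_trans _ _ (w 0)); first by case: (wk_w0 hi).
apply: (@connect_trans _ _ (w j)); first by case: (wk_w0 hj).
by apply: mono_d (subD hj) _ _ _; apply: scj => //; apply: wC.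
Qed.

Section Remove.
Variable v : V.
Notation uD := (connect (uadj F (DD :\ v))).

Lemma piece i x y : i <= t -> x \in C i -> y \in C i -> x != v -> y != v -> uD x y.
Proof.
move=> hi hx hy xv yv; have [sc [_ hb]] := HC hi.
case: (boolP (v \in C i)) => hv.
  apply: mono_u (setSD _ (subD hi)) _ _ _.
  by apply: hb => //; rewrite in_setD1 ?xv ?yv.
apply: mono_u (C i) _ _ _ _ _; last exact: sc_uc.
apply/subsetP=> z hz; rewrite in_setD1 (subsetP (subD hi) _ hz) andbT.
by apply/eqP=> ez; rewrite -ez hz in hv.
Qed.

Lemma chainA k : k <= t -> (forall i, i <= k -> w i != v) -> uD (w 0) (w k).
Proof.
elim: k => [|k IH] hk hw; first exact: connect0.
apply: connect_trans (IH (ltnW hk) (fun i hi => hw i (leqW hi))) _.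
have [a b] := Hi (i:=k.+1) ltac:(by rewrite hk).
by apply: (piece hk a b); apply: hw.
Qed.

Lemma chainB d k : k + d = t -> (forall i, k <= i <= t -> w i != v) -> uD (w k) (w t).
Proof.
elim: d k => [|d IH] k hk hw; first by rewrite addn0 in hk; rewrite hk; apply: connect0.
have hk1 : k.+1 <= t by lia.
apply: connect_trans _ (IH k.+1 ltac:(by lia) (fun i hi => hw i ltac:(by lia))).
have [a b] := Hi (i:=k.+1) ltac:(by rewrite hk1).
by apply: (piece hk1 a b); apply: hw; lia.
Qed.

Lemma hub k : k <= t -> w k != v ->
  (w 0 != v /\ uD (w k) (w 0)) \/ (w t != v /\ uD (w k) (w t)).
Proof.
move=> hk wkv.
case: (boolP [exists i : 'I_k.+1, w i == v]) => [/existsP[i /eqP wi]|/existsPn hn].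
  right.
  have hB : forall j, k <= j <= t -> w j != v.
    move=> j /andP[kj jt]; apply/eqP=> wj.
    have ik : i <= k by have := ltn_ord i.
    have eij := inj (leq_trans ik hk) jt (etrans wi (esym wj)).
    move: ik; rewrite eij => jk.
    have ejk : j = k by apply/eqP; rewrite eqn_leq jk kj.
    by move: wkv; rewrite -ejk wj eqxx.
  split; first by apply: hB; rewrite hk leqnn.
  by apply: (@chainB (t - k)); first lia.
left.
have hA : forall j, j <= k -> w j != v.
  by move=> j hj; have := hn (Ordinal (n:=k.+1) (m:=j) hj).
split; first exact: hA.
by rewrite uadj_sym; apply: chainA.
Qed.

Lemma link : w 0 != v -> w t != v -> uD (w 0) (w t).
Proof. by move=> a b; apply: (@piece 0 _ _ (leq0n t) H00 H0t a b). Qed.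

Lemma reach x : x \in DD :\ v ->
  (w 0 != v /\ uD x (w 0)) \/ (w t != v /\ uD x (w t)).
Proof.
rewrite in_setD1 => /andP[xv /inD[i hi hx]].
have [k [hk wk wkv]] : exists k, [/\ k <= t, w k \in C i & w k != v].
  have two : forall a b, a <= t -> b <= t -> a != b -> w a \in C i -> w b \in C i ->
      exists k, [/\ k <= t, w k \in C i & w k != v].
    move=> a b ha hb ab wa wb.
    case: (eqVneq (w a) v) => [eav|nav]; last by exists a.
    exists b; split=> //; apply/eqP=> ebv.
    by move/eqP: ab; apply; apply: inj => //; rewrite eav ebv.
  move: two; case: i hi hx => [|i] hi hx two.
    by apply: (two 0 t) => //; rewrite eq_sym -lt0n.
  have [a b] := Hi (i:=i.+1) ltac:(by rewrite hi).
  by apply: (two i i.+1) => //; [apply: ltnW | rewrite neq_ltn ltnSn].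
have hxk : uD x (w k) by apply: (piece hi hx wk).
by case: (hub hk wkv) => [[h1 h2]|[h1 h2]]; [left|right]; split=> //;
  apply: connect_trans hxk h2.
Qed.

Lemma uc_Dv : uconnected F (DD :\ v).
Proof.
move=> x y hx hy.
case: (reach hx) => [[a hxa]|[a hxa]]; case: (reach hy) => [[b hyb]|[b hyb]];
  rewrite (uadj_sym _ _ y) in hyb.
- exact: connect_trans hxa hyb.
- by apply: connect_trans hxa _; apply: connect_trans (link a b) hyb.
- apply: connect_trans hxa _; apply: connect_trans _ hyb.
  by rewrite uadj_sym; apply: link.
- exact: connect_trans hxa hyb.
Qed.
End Remove.

Lemma sb_D : strongly_biconnected F DD.
Proof.
split; first exact: sc_D.
split; first exact: sc_uc sc_D.
move=> v _; exact: uc_Dv.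
Qed.

End Union.

Lemma max_ext (P : {set V} -> Prop) (U0 : {set V}) : P U0 ->
  exists U : {set V}, [/\ U0 \subset U, P U &
    forall U' : {set V}, U \subset U' -> P U' -> U' = U].
Proof.
have : forall n (U : {set V}), #|V| - #|U| <= n -> P U -> exists U1 : {set V}, [/\ U \subset U1, P U1 &
    forall U' : {set V}, U1 \subset U' -> P U' -> U' = U1].
  elim=> [|n IH] U hn hU.
  - exists U; split=> // U' sUU' hU'.
    apply/esym/eqP; rewrite eqEcard sUU' /=.
    by have c : #|U'| <= #|V| := max_card _; lia.
  - case: (classic (forall U' : {set V}, U \subset U' -> P U' -> U' = U)) => hm.
      by exists U; split.
    destruct (not_all_ex_not _ _ hm) as [U' hm1].
    destruct (imply_to_and _ _ hm1) as [sUU' hm2].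
    destruct (imply_to_and _ _ hm2) as [hU' neq].
    have pr : U \proper U' by rewrite properEneq sUU' andbT eq_sym; apply/eqP.
    have c2 := proper_card pr; have c1 : #|U'| <= #|V| := max_card _.
    have [U1 [s1 p1 m1]] := IH U' ltac:(by lia) hU'.
    by exists U1; split=> //; apply: subset_trans s1.
by move=> h hU0; apply: (h _ U0 (leqnn _) hU0).
Qed.

End Helpers.

Theorem mainTheorem3 (V : finType) (E : {set V * V}) (t : nat) (w : nat -> V) :
  strongly_biconnected E [set: V] ->
  1 <= t ->
  (forall i j, i <= t -> j <= t -> w i = w j -> i = j) ->
  e_rel E (w 0) (w t) ->
  (forall i, 1 <= i <= t -> e_rel E (w i.-1) (w i)) ->
  exists U : {set V}, two_edge_biconnected_block E U /\
    forall i, i <= t -> w i \in U.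
Proof.
move=> _ t1 inj h0 hi.
have allC : forall b, b \in E -> exists C0, sb_component (E :\ b) C0 /\
    forall k, k <= t -> w k \in C0.
  move=> b hb.
  have [C0 [c0 a0 b0]] := h0 b hb.
  have ex : forall i, exists Ci : {set V}, 1 <= i <= t ->
      [/\ sb_component (E :\ b) Ci, w i.-1 \in Ci & w i \in Ci].
    move=> i; case: (boolP (1 <= i <= t)) => hit; last by exists set0.
    by have [Ci hCi] := hi i hit b hb; exists Ci.
  pose Cf := fun i => if i is 0 then C0 else proj1_sig (constructive_indefinite_description _ (ex i)).
  have HCf : forall i, 1 <= i <= t -> [/\ sb_component (E :\ b) (Cf i), w i.-1 \in Cf i & w i \in Cf i].
    move=> [|i] //= hit; exact: (proj2_sig (constructive_indefinite_description _ (ex i.+1)) hit).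
  have HC : forall i, i <= t -> strongly_biconnected (E :\ b) (Cf i).
    move=> [|i] hit; first by case: c0.
    by have [[]] := HCf i.+1 ltac:(by rewrite hit).
  have Hi' : forall i, 1 <= i <= t -> w i.-1 \in Cf i /\ w i \in Cf i.
    by move=> i hit; have [] := HCf i hit.
  have sb := sb_D t1 HC a0 b0 Hi' inj.
  have eqD : DD t Cf = C0 by apply: c0.2 => //; exact: (subD Cf (leq0n t)).
  exists C0; split=> // k hk; rewrite -eqD; apply: (subsetP (subD Cf hk)).
  exact: (wC a0 Hi' hk).
pose U0 := [set w (val i) | i : 'I_t.+1].
have inU0 : forall k, k <= t -> w k \in U0.
  by move=> k hk; apply/imsetP; exists (Ordinal (n:=t.+1) (m:=k) hk).
have setU0 : two_edge_biconnected_set E U0.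
  split.
    apply/card_gt1P; exists (w 0), (w t); split; try exact: inU0.
    by apply/eqP=> e; have := inj 0 t (leq0n t) (leqnn t) e; lia.
  move=> x y /imsetP[i _ ->] /imsetP[j _ ->] _ b hb.
  have [C0 [c0 hk]] := allC b hb.
  by exists C0; split=> //; apply: hk; rewrite -ltnS ltn_ord.
have [U [sU pU mU]] := max_ext setU0.
exists U; split; first by split.
by move=> k hk; apply: (subsetP sU); apply: inU0.
Qed.
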